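(* Let $y\ge1$ and let $k\ge2$ be an integer. For $\Re s>1$ let $f_y(s)=\sum_{n>y}\mu(n)n^{-s}$, and let $\sum_{d=1}^\infty a_d d^{-s}$ be the Dirichlet series of $\zeta(s)f_y(ks)$ (valid for $\Re s>1$). Then $|a_d|\le y$ for every $d\ge1$.
   Context: $\mu$ denotes the Möbius function and $\zeta$ the Riemann zeta-function; the sum defining $f_y$ runs over integers $n>y$. *)

(* Defs.v *)
From mathcomp Require Import all_boot all_order all_algebra.
From mathcomp Require Import reals.
Set Implicit Arguments. Unset Strict Implicit. Unset Printing Implicit Defensive.
Import Order.TTheory GRing.Theory Num.Theory.
Local Open Scope ring_scope.

Definition mobius (n : nat) : int :=
  if n == 0%N then 0
  else if [exists p : 'I_n.+1, (prime p && (p * p %| n)%N)] then 0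
  else (-1) ^+ size (primes n).

(* Coefficients of the Dirichlet series f_y(k s) = sum_{n > y} mu(n) n^{-ks}:
   coefficient of m^{-s} is mu(n) if m = n^k with n > y, else 0. *)
Definition fyk_coef {R : realType} (k : nat) (y : R) (m : nat) : int :=
  \sum_(1 <= n < m.+1 | (y < n%:R) && (n ^ k == m)%N) mobius n.

(* Coefficient a_d of the Dirichlet series of zeta(s) f_y(ks): the Dirichlet
   convolution of the constant-1 sequence (zeta) with fyk_coef. *)
Definition zeta_fy_coef {R : realType} (k : nat) (y : R) (d : nat) : int :=
  \sum_(1 <= m < d.+1 | (m %| d)%N) fyk_coef k y m.

(* Main.v *)
Require Import Defs.
From mathcomp Require Import all_boot all_order all_algebra.
From mathcomp Require Import reals.
From mathcomp Require Import zify ring lra.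
Import Order.TTheory GRing.Theory Num.Theory.
Local Open Scope ring_scope.

Lemma mu0 : mobius 0 = 0. Proof. by []. Qed.

Lemma mu_sq p n : prime p -> (p * p %| n)%N -> mobius n = 0.
Proof.
move=> pp pn; rewrite /mobius; case: eqP => // /eqP n0.
have lepn : (p < n.+1)%N.
  rewrite ltnS; apply: leq_trans (dvdn_leq _ pn); last by lia.
  by rewrite leq_pmulr // prime_gt0.
suff -> : [exists q : 'I_n.+1, prime q && (q * q %| n)%N] by [].
by apply/existsP; exists (Ordinal lepn); rewrite /= pp pn.
Qed.


Lemma sqex n : (0 < n)%N ->
  reflect (exists q, prime q && (q * q %| n)%N)
  [exists q : 'I_n.+1, prime q && (q * q %| n)%N].
Proof.
move=> n0; apply: (iffP existsP) => [[q /andP[]]|[q /andP[qp qd]]].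
  by exists q; apply/andP.
have lq : (q < n.+1)%N.
  rewrite ltnS; apply: leq_trans (dvdn_leq n0 qd).
  by rewrite leq_pmulr // prime_gt0.
by exists (Ordinal lq); rewrite /= qp.
Qed.

Lemma mu_mulp p n : prime p -> ~~ (p %| n)%N -> (0 < n)%N ->
  mobius (n * p) = - mobius n.
Proof.
move=> pp pn n0.
have p0 := prime_gt0 pp.
have np0 : (0 < n * p)%N by rewrite muln_gt0 n0.
rewrite /mobius (negPf (lt0n_neq0 np0)) (negPf (lt0n_neq0 n0)).
have -> : [exists q : 'I_(n * p).+1, prime q && (q * q %| n * p)%N] =
          [exists q : 'I_n.+1, prime q && (q * q %| n)%N].
  apply/idP/idP => [/(@sqex _ np0) [q /andP[qp qd]]|/(@sqex _ n0) [q /andP[qp qd]]].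
    apply/(@sqex _ n0); exists q; rewrite qp /=.
    case: (eqVneq q p) => [eqp|nqp].
      by move: qd; rewrite eqp dvdn_pmul2r // (negPf pn).
    rewrite Gauss_dvdl // in qd.
    by rewrite coprimeMl !prime_coprime // dvdn_prime2 // nqp.
  by apply/(@sqex _ np0); exists q; rewrite qp dvdn_mulr.
case: ifP => // _.
have -> : size (primes (n * p)) = (size (primes n)).+1.
  have -> : (size (primes n)).+1 = size (p :: primes n) by [].
  apply: perm_size; apply: uniq_perm.
  - exact: primes_uniq.
  - by rewrite /= primes_uniq andbT mem_primes pp n0 /= (negPf pn).
  by move=> q; rewrite primesM // [primes p]primes_prime // in_cons in_nil orbF orbC in_cons.

by rewrite exprS mulN1r.
Qed.

Lemma mu_norm n : (`|mobius n| <= 1)%R.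
Proof.
rewrite /mobius; case: ifP => _ //; case: ifP => _ //.
by rewrite normrX normrN1 expr1n.
Qed.

Lemma mult_sum p N (F : nat -> int) : (0 < p)%N ->
  \sum_(0 <= n < N * p) (if (p %| n)%N then F n else 0) =
  \sum_(0 <= j < N) F (j * p).
Proof.
move=> p0; elim: N => [|N IH]; first by rewrite mul0n !big_geq.
rewrite big_nat_recr //= -IH mulSn addnC [LHS](@big_cat_nat _ _ _ (N * p)) ?leq_addr //=.
congr (_ + _).
rewrite big_ltn_cond /=; last by rewrite -[X in (X < _)%N]addn0 ltn_add2l.
rewrite dvdn_mull // big1_seq ?addr0 // => n /andP[_].
rewrite mem_index_iota => /andP[h1 h2].
have -> : n = (N * p + (n - N * p))%N by lia.
rewrite dvdn_addr ?dvdn_mull //.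
case: ifP => // /dvdn_leq; lia.
Qed.

Lemma sum_restrict a b c (P : pred nat) (F : nat -> int) :
  (forall n, P n -> (a <= n < b)%N) -> (forall n, P n -> (n < c)%N) ->
  \sum_(a <= n < b | P n) F n = \sum_(0 <= n < c | P n) F n.
Proof.
move=> Hab Hc.
have E1 : \sum_(a <= n < b | P n) F n = \sum_(0 <= n < b | P n) F n.
  case: (leqP a b) => ab.
    rewrite (@big_cat_nat _ _ _ a 0 b _ _ (leq0n a) ab) /= [X in _ = X + _]big1_seq ?add0r // => n /andP[Pn].
    by rewrite mem_index_iota; move: (Hab n Pn) => /andP[]; lia.
  by rewrite big_geq ?(ltnW ab) // big1 // => n Pn; move: (Hab n Pn) => /andP[]; lia.
rewrite E1 (big_nat_widen _ _ _ _ _ (leq_addr c b))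
   (big_nat_widen _ _ _ _ _ (leq_addl b c)).
apply: eq_bigl => n; case Pn: (P n) => //=.
by move: (Hab n Pn) (Hc n Pn); lia.
Qed.

Lemma trunc d N (F : nat -> int) : (d.+1 <= N)%N ->
  (forall n, (d < n)%N -> F n = 0) ->
  \sum_(0 <= n < N) F n = \sum_(0 <= n < d.+1) F n.
Proof.
move=> dN H; rewrite (@big_cat_nat _ _ _ d.+1 0 N _ _ (leq0n d.+1) dN) /= [X in _ + X = _]big1_seq ?addr0 // => n /andP[_].
by rewrite mem_index_iota => /andP[h _]; apply: H.
Qed.

Lemma le_pow n k : (0 < k)%N -> (n <= n ^ k)%N.
Proof.
move=> k0; case: n => [|n] //.
by rewrite -{1}(expn1 n.+1) leq_pexp2l.
Qed.

Lemma zeta_eq (R : realType) (y : R) k d : (0 < d)%N -> (0 < k)%N ->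
  zeta_fy_coef k y d =
  \sum_(0 <= n < d.+1 | y < n%:R) (if (n ^ k %| d)%N then mobius n else 0).
Proof.
move=> d0 k0; rewrite /zeta_fy_coef /fyk_coef.
have inner : forall m, (1 <= m <= d)%N ->
  \sum_(1 <= n < m.+1 | (y < n%:R) && (n ^ k == m)%N) mobius n =
  \sum_(0 <= n < d.+1 | y < n%:R) (if (n ^ k == m)%N then mobius n else 0).
  move=> m /andP[m1 md]; rewrite -big_mkcondr.
  apply: sum_restrict => n /andP[_ /eqP e].
    have := le_pow n k k0; rewrite e => nm.
    have : (0 < n)%N.
      case: n e {nm} => // e; move: m1; rewrite -e exp0n //.
    lia.
  have := le_pow n k k0; rewrite e; lia.
rewrite big_nat_cond (eq_bigr (fun m => \sum_(0 <= n < d.+1 | y < n%:R)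
   (if (n ^ k == m)%N then mobius n else 0))); last first.
  move=> m /andP[/andP[m1 md] _]; apply: inner; rewrite m1 /=; lia.
rewrite -big_nat_cond exchange_big_nat; apply: eq_bigr => n _.
rewrite -big_mkcondr.
case: ifP => [nd|nd]; last first.
  by rewrite big1 // => m /andP[md /eqP e]; move: nd; rewrite e md.
rewrite -big_filter.
have -> : [seq x <- index_iota 1 d.+1 | (x %| d)%N && (n ^ k == x)%N] = [:: (n ^ k)%N].
  rewrite (eq_filter (a2 := pred1 (n ^ k)%N)); last first.
    move=> x /=; case: (eqVneq x (n ^ k)%N) => [->|ne]; first by rewrite nd.
    by rewrite andbF.
  apply: filter_pred1_uniq; first exact: iota_uniq.
  rewrite mem_index_iota; have := dvdn_leq d0 nd; rewrite expn_gt0.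
  case: n nd => [|n] nd; first by move: nd; rewrite exp0n // dvd0n; lia.
  by move=> h; rewrite /= ltnS h.
by rewrite big_cons big_nil /= addr0.
Qed.

Definition G k d n : int := if (n ^ k %| d)%N then mobius n else 0.

Lemma G_mulp k d p j : prime p -> (p ^ k %| d)%N ->
  G k d (j * p) = if ~~ (p %| j)%N then - G k d j else 0.
Proof.
move=> pp pkd; rewrite /G; case pj: (p %| j)%N => /=.
  by rewrite (@mu_sq p) ?if_same // dvdn_mul.
have j0 : (0 < j)%N by case: j pj => //; rewrite dvdn0.
rewrite mu_mulp ?pj // expnMn Gauss_dvd ?pkd ?andbT.
  by case: ifP; rewrite ?oppr0.
by apply: coprimeXl; apply: coprimeXr; rewrite coprime_sym prime_coprime ?pj.
Qed.

Lemma total_zero k d p : prime p -> (p ^ k %| d)%N -> (0 < d)%N -> (0 < k)%N ->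
  \sum_(0 <= n < d.+1) G k d n = 0.
Proof.
move=> pp pkd d0 k0.
have p0 := prime_gt0 pp.
have Gz : forall n, (d < n)%N -> G k d n = 0.
  move=> n dn; rewrite /G; case: ifP => // h.
  have := dvdn_leq d0 h; have := le_pow n k k0; lia.
have dM : (d.+1 <= d.+1 * p)%N by rewrite leq_pmulr.
rewrite -(@trunc d _ _ dM Gz).
rewrite (eq_bigr (fun n => (if (p %| n)%N then G k d n else 0) +
   (if ~~ (p %| n)%N then G k d n else 0))); last first.
  by move=> n _; case: ifP => _ /=; rewrite ?addr0 ?add0r.
rewrite big_split /= mult_sum //.
rewrite (@trunc d _ _ dM); last by move=> n dn; rewrite Gz ?if_same.
rewrite -big_split /= big1 // => j _.
by rewrite G_mulp //; case: ifP => _; rewrite ?addNr ?addr0.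
Qed.

Lemma count_le (R : realType) (y : R) D : 0 <= y ->
  ((\sum_(1 <= n < D.+1 | ~~ (y < n%:R)) (1 : int))%:~R : R) <= y /\
  (\sum_(1 <= n < D.+1 | ~~ (y < n%:R)) (1 : int)) <= D%:Z.
Proof.
move=> y0; elim: D => [|D [IH1 IH2]]; first by rewrite big_geq.
rewrite big_mkcond big_nat_recr //= -big_mkcond.
case: ifP => h.
  rewrite intrD; split.
    rewrite -leNgt in h.
    apply: le_trans h; rewrite -natr1 lerD2r.
    have : ((\sum_(1 <= n < D.+1 | ~~ (y < n%:R)) (1 : int))%:~R : R) <= D%:Z%:~R.
      by rewrite ler_int.
    by [].
  by rewrite intS [X in _ <= X]addrC lerD2r.
split; rewrite addr0 //; apply: le_trans IH2 _; by rewrite lez_nat.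
Qed.

Theorem lemma1 (R : realType) (y : R) (k : nat) :
  1 <= y -> (2 <= k)%N ->
  forall d : nat, (1 <= d)%N -> ((`|zeta_fy_coef k y d|)%:~R : R) <= y.
Proof.
move=> y1 k2 d d0.
have k0 : (0 < k)%N by lia.
rewrite zeta_eq //.
case E: [exists p : 'I_d.+1, prime p && (p ^ k %| d)%N]; last first.
  rewrite big1; first by rewrite normr0 (le_trans _ y1).
  move=> n yn; case: ifP => // nd.
  have n1 : (1 < n)%N by rewrite -(ltr_nat R); apply: le_lt_trans yn.
  have qp := pdiv_prime n1.
  have qd : (pdiv n ^ k %| d)%N := dvdn_trans (dvdn_exp2r k (pdiv_dvd n)) nd.
  have qle : (pdiv n < d.+1)%N.
    rewrite ltnS; apply: leq_trans (dvdn_leq d0 qd).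
    apply: le_pow; lia.
  have : [exists p : 'I_d.+1, prime p && (p ^ k %| d)%N] by apply/existsP; exists (Ordinal qle); rewrite /= qp.
  by rewrite E.
case/existsP: E => p /andP[pp pkd].
have tot := @total_zero k d p pp pkd d0 k0.
move: tot; rewrite (bigID (fun n => y < n%:R)) /= => /eqP.
rewrite addr_eq0 => /eqP ->; rewrite normrN.
set C := \sum_(1 <= n < d.+1 | ~~ (y < n%:R)) (1 : int).
have [C1 _] := @count_le R y d (le_trans ler01 y1).
apply: le_trans C1; rewrite ler_int.
apply: le_trans (ler_norm_sum _ _ _) _.
rewrite big_ltn_cond //= /G mu0 if_same normr0.
case: ifP => _; rewrite ?add0r; apply: ler_sum => n _; by rewrite /G; case: ifP => _; rewrite ?normr0 ?mu_norm.
Qed.
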